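(* Let $R$ be a commutative ring endowed with a translation-invariant partial order $\le$ on its additive group such that $R^+$ is closed under multiplication. If $R$ is archimedean and localizable, then $r^2\in R^+$ for all $r\in R$ (so $R$ is a partially ordered commutative ring).
   Context: Rings are commutative with unit $1$; $\mathbb{N}=\{1,2,\dots\}$. Translation-invariant means $r\le s$ implies $r+t\le s+t$; $R^+=\{r:0\le r\}$. A partially ordered commutative ring is such a ring whose positive cone is closed under multiplication and contains all squares. $R$ is archimedean if whenever $g,h\in R$ satisfy $kg+h\in R^+$ for all $k\in\mathbb{N}$, then $g\in R^+$. $\mathrm{Loc}(R)$ is the set of $s\in 1+R^+$ such that for all $r\in R$, $rs\in R^+$ implies $r\in R^+$. $R$ is localizable if for every $r\in R$ there exists $s\in\mathrm{Loc}(R)$ with $-s\le r\le s$. *)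

(* Defs.v *)
From mathcomp Require Import all_boot all_algebra.
Set Implicit Arguments. Unset Strict Implicit. Unset Printing Implicit Defensive.
Import GRing.Theory.
Local Open Scope ring_scope.

Section Defs.
Variable R : comPzRingType.
Variable le : R -> R -> Prop.

Definition partial_order : Prop :=
  (forall x, le x x) /\
  (forall x y, le x y -> le y x -> x = y) /\
  (forall x y z, le x y -> le y z -> le x z).

Definition translation_invariant : Prop :=
  forall r s t, le r s -> le (r + t) (s + t).

Definition pos_cone (r : R) : Prop := le 0 r.

Definition pos_mul_closed : Prop :=
  forall r s, pos_cone r -> pos_cone s -> pos_cone (r * s).

Definition archimedean : Prop :=
  forall g h : R, (forall k : nat, (0 < k)%N -> pos_cone (g *+ k + h)) ->
    pos_cone g.

Definition Loc (s : R) : Prop :=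
  pos_cone (s - 1) /\ (forall r : R, pos_cone (r * s) -> pos_cone r).

Definition localizable : Prop :=
  forall r : R, exists s : R, Loc s /\ le (- s) r /\ le r s.
End Defs.

(* Main.v *)
Require Import Defs.
From mathcomp Require Import all_boot all_algebra.
From mathcomp Require Import ring.
Local Open Scope ring_scope.
Import GRing.Theory.
Set Implicit Arguments.

Section Q.
Variable R : comPzRingType.
Variables a b : R.
Fixpoint qq (N : nat) (c : int) : R :=
  match N with
  | 0%N => (c%:~R) ^+ 2
  | N'.+1 => a * qq N' (c + 1) + b * qq N' (c - 1)
  end.

Lemma qq_closed N c : qq N.+2 c =
  (N.+2)%:R * (N.+1)%:R * (a - b) ^+ 2 * (a + b) ^+ N + (N.+2)%:R * (a + b) ^+ N.+2
  + 2 * c%:~R * (N.+2)%:R * (a - b) * (a + b) ^+ N.+1 + c%:~R ^+ 2 * (a + b) ^+ N.+2.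
Proof.
elim: N c => [|N IH] c.
  rewrite /= ?intrD ?intrB ?intrN ?mulr1z. ring.
change (qq N.+3 c) with (a * qq N.+2 (c+1) + b * qq N.+2 (c-1)).
rewrite !IH ?intrD ?intrB ?intrN ?mulr1z.
rewrite !exprS.
have -> : (N.+3)%:R = N%:R + 3 :> R by rewrite -[in LHS]addn3 natrD.
have -> : (N.+2)%:R = N%:R + 2 :> R by rewrite -[in LHS]addn2 natrD.
have -> : (N.+1)%:R = N%:R + 1 :> R by rewrite -[in LHS]addn1 natrD.
ring.
Qed.
End Q.

Section Main.
Variable R : comPzRingType.
Variable le : R -> R -> Prop.
Hypothesis PO : partial_order le.
Hypothesis TI : translation_invariant le.
Hypothesis PM : pos_mul_closed le.
Hypothesis AR : archimedean le.
Hypothesis LC : localizable le.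

Local Notation pos := (pos_cone le).

Lemma le_trans' x y z : le x y -> le y z -> le x z.
Proof. by case: PO => _ [_ ]; apply. Qed.

Lemma le_pos x y : le x y -> pos (y - x).
Proof. by move=> h; have := @TI _ _ (- x) h; rewrite subrr. Qed.

Lemma pos_le x y : pos (y - x) -> le x y.
Proof. by move=> h; have := @TI _ _ x h; rewrite add0r subrK. Qed.

Lemma posD x y : pos x -> pos y -> pos (x + y).
Proof.
move=> hx hy; apply: le_trans' hy _.
by have := @TI _ _ y hx; rewrite add0r.
Qed.

Lemma pos1 : pos 1.
Proof.
have [s [[_ Ls] [_ h]]] := LC 0.
by apply: Ls; rewrite mul1r.
Qed.

Lemma posMn x n : pos x -> pos (x *+ n).
Proof.
move=> hx; elim: n => [|n IH]; first by rewrite mulr0n; case: PO => h _; apply: h.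
by rewrite mulrS; apply: posD.
Qed.

Lemma posnat n : pos n%:R.
Proof. exact: posMn pos1. Qed.

Lemma posM x y : pos x -> pos y -> pos (x * y).
Proof. exact: PM. Qed.

Lemma loc_pos s : Loc le s -> pos s.
Proof. by case=> h _; rewrite -(subrK 1 s); apply: posD h pos1. Qed.

Lemma loc_pow s x n : Loc le s -> pos (x * s ^+ n) -> pos x.
Proof.
move=> [_ Ls]; elim: n x => [|n IH] x; first by rewrite expr0 mulr1.
by rewrite exprSr mulrA => /Ls /IH.
Qed.

Lemma bound_pos r : exists s, [/\ Loc le s, pos (s + r) & pos (s - r)].
Proof.
have [s [Ls [h1 h2]]] := LC r.
exists s; split => //; last exact: le_pos.
by have := le_pos h1; rewrite opprK addrC.
Qed.

Lemma pos_div x n : (0 < n)%N -> pos (x *+ n) -> pos x.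
Proof.
move=> n0 hx.
have [s [Ls hp _]] := bound_pos x.
have sp := loc_pos Ls.
apply: (@AR _ (s *+ n)) => k k0.
have lt : (k %% n <= n)%N by apply: ltnW; rewrite ltn_mod.
have -> : s *+ n = s *+ (k %% n) + s *+ (n - k %% n) by rewrite -mulrnDr subnKC.
rewrite {1}(divn_eq k n) mulrnDr mulrnA mulrnAC.
rewrite addrA -(addrA (_ *+ _)) -mulrnDl.
apply: posD; last exact: posMn.
by apply: posD; apply: posMn => //; rewrite addrC.
Qed.

Lemma qq_pos a b : pos a -> pos b -> forall N c, pos (@qq R a b N c).
Proof.
move=> ha hb; elim=> [|N IH] c /=; last by apply: posD; apply: posM.
case: c => n.
  by have -> : (Posz n)%:~R = n%:R :> R by []; rewrite -natrX; apply: posnat.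
by have -> : (Negz n)%:~R = - n.+1%:R :> R by []; rewrite sqrrN -natrX; apply: posnat.
Qed.

End Main.

Theorem proposition4 (R : comPzRingType) (le : R -> R -> Prop) :
  partial_order le -> translation_invariant le -> pos_mul_closed le ->
  archimedean le -> localizable le ->
  forall r : R, pos_cone le (r ^+ 2).
Proof.
move=> PO TI PM AR LC r.
have [s [Ls ha hb]] := bound_pos TI LC r.
apply: (@AR _ (s ^+ 2)) => k; case: k => // n _.
have := qq_pos PO TI PM LC _ _ ha hb n.+2 0.
rewrite qq_closed.
have -> : (s + r) - (s - r) = 2 * r by ring.
have -> : (s + r) + (s - r) = 2 * s by ring.
have -> : (0 : int)%:~R = 0 :> R by [].
have -> : (n.+2)%:R = n%:R + 2 :> R by rewrite -[in LHS]addn2 natrD.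
have -> : (n.+1)%:R = n%:R + 1 :> R by rewrite -[in LHS]addn1 natrD.
move=> h.
apply: (@loc_pow _ _ _ _ n Ls).
apply: (@pos_div _ _ PO TI AR LC _ (n.+2 * 2 ^ n.+2)%N); first by rewrite muln_gt0 expn_gt0.
move: h; congr (pos_cone le _).
rewrite -(mulr_natr _ (n.+2 * 2 ^ n.+2)) -(mulr_natr (r ^+ 2)) natrM natrX.
have -> : (n.+2)%:R = n%:R + 2 :> R by rewrite -[in LHS]addn2 natrD.
have -> : (n.+1)%:R = n%:R + 1 :> R by rewrite -[in LHS]addn1 natrD.
rewrite !exprMn !exprS.
ring.
Qed.
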